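(* Let $V, K$ be positive integers and let $\mathbf{p}_1,\dots,\mathbf{p}_K \in [0,1]^V$ be vectors with entries $p_{ij}$. Define $p_i^{\mathrm{OPT}} = \prod_{j=1}^K p_{ij}$ for $i=1,\dots,V$ and $\mathrm{OPT} = \sum_{i=1}^V p_i^{\mathrm{OPT}}$. Then for every $\mathbf{b} \in [0,1]^V$ there exists $j \in \{1,\dots,K\}$ such that $$\sum_{i=1}^V p_{ij} b_i \;\le\; \Big(1-\frac{1}{K}\Big)\sum_{i=1}^V b_i + \frac{\mathrm{OPT}}{K}.$$
   Context: In the paper, $i$ indexes voxels of a map, $j$ indexes depth-measuring rays, $p_{ij}\in[0,1]$ is the (estimated) probability that voxel $i$ is not covered by ray $j$, and $\mathbf b$ is a vector of current per-voxel losses. *)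

(* Defs.v *)
From HB Require Import structures.
From mathcomp Require Import all_boot all_order all_algebra.
Set Implicit Arguments. Unset Strict Implicit. Unset Printing Implicit Defensive.
Import Order.TTheory GRing.Theory Num.Theory.
Local Open Scope ring_scope.

Definition p_opt (R : realFieldType) (V K : nat) (p : 'I_V -> 'I_K -> R) (i : 'I_V) : R :=
  \prod_(j < K) p i j.

Definition OPT (R : realFieldType) (V K : nat) (p : 'I_V -> 'I_K -> R) : R :=
  \sum_(i < V) p_opt p i.

(* Main.v *)
Require Import Defs.
From HB Require Import structures.
From mathcomp Require Import all_boot all_order all_algebra.
From mathcomp Require Import lra.
Import Order.TTheory GRing.Theory Num.Theory.
Local Open Scope ring_scope.

Lemma sum_prod_bound (R : realFieldType) (n : nat) (q : 'I_n -> R)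
  (hq : forall j, 0 <= q j <= 1) :
  \sum_(j < n) q j <= n%:R - 1 + \prod_(j < n) q j /\ 0 <= \prod_(j < n) q j <= 1.
Proof.
elim: n q hq => [|n IH] q hq.
  by rewrite !big_ord0; split; [lra | apply/andP; split; lra].
have [H1 /andP [H2 H3]] := IH (fun j => q (lift ord_max j)) (fun j => hq _).
rewrite big_ord_recr big_ord_recr /=.
have /andP [h1 h2] := hq ord_max.
have E : forall j : 'I_n, widen_ord (leqnSn n) j = lift ord_max j.
  by move=> j; apply: val_inj; rewrite /= /bump leqNgt ltn_ord.
have E2 : forall F : _ -> R, (fun i : 'I_n => F (widen_ord (leqnSn n) i)) =1 (fun i => F (lift ord_max i)) by move=> F j; rewrite E.
rewrite (eq_bigr _ (fun j _ => E2 q j)) (eq_bigr _ (fun j _ => E2 q j)).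
set P := \prod_(i < n) q (lift ord_max i) in H1 H2 H3 *.
set S := \sum_(i < n) q (lift ord_max i) in H1 *.
split; last (apply/andP; split).
- rewrite -natr1. have : 0 <= (1 - P) * (1 - q ord_max) by apply: mulr_ge0; rewrite subr_ge0.
  move=> h. nra.
- exact: mulr_ge0.
- nra.
Qed.

Theorem lemma1 (R : realFieldType) (V K : nat) (hV : (0 < V)%N) (hK : (0 < K)%N)
  (p : 'I_V -> 'I_K -> R)
  (hp : forall i j, 0 <= p i j <= 1)
  (b : 'I_V -> R)
  (hb : forall i, 0 <= b i <= 1) :
  exists j : 'I_K,
    \sum_(i < V) p i j * b i
      <= (1 - K%:R^-1) * \sum_(i < V) b i + OPT p / K%:R.
Proof.
set C := (1 - K%:R^-1) * \sum_(i < V) b i + OPT p / K%:R.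
have Kpos : 0 < K%:R :> R by rewrite ltr0n.
have tot : \sum_(j < K) \sum_(i < V) p i j * b i <= K%:R * C.
  rewrite exchange_big /C mulrDr mulrA mulrBr mulr1 mulfV ?gt_eqF //.
  rewrite (mulrC (OPT p)) mulrA mulfV ?gt_eqF // mul1r /OPT mulr_sumr -big_split /=.
  apply: ler_sum => i _.
  have [h1 /andP [h2 h3]] := @sum_prod_bound R K (p i) (hp i).
  have /andP [hb1 hb2] := hb i.
  rewrite -mulr_suml /p_opt.
  set S := \sum_(j < K) p i j in h1 *. set P := \prod_(j < K) p i j in h1 h2 h3 *.
  have : b i * S <= b i * (K%:R - 1 + P) by apply: ler_wpM2l.
  nra.
apply/existsP; apply: contraT => /existsPn H.
have : K%:R * C < \sum_(j < K) \sum_(i < V) p i j * b i.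
  have -> : K%:R * C = \sum_(j < K) C by rewrite sumr_const card_ord mulr_natl.
  apply: ltr_sum; first by apply/hasP; exists (Ordinal hK); rewrite ?mem_index_enum.
  by move=> j _; move: (H j); rewrite -ltNge.
by rewrite ltNge tot.
Qed.
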